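(* Let $\mathcal F$ be a Finsler function on $\mathbb R^n$, and let $((x^i),(y^i))$ be the coordinates on $T\mathbb R^n$ induced by the canonical coordinates of $\mathbb R^n$. Then $(\mathbb R^n,\mathcal F)$ is a Minkowski space (i.e. $\mathcal F(p,v)$ does not depend on $p$) if and only if $$\frac{\partial^2\mathcal F^2}{\partial x^k\partial y^i}\,y^k=\frac12\,\frac{\partial^2\mathcal F^2}{\partial x^i\partial y^k}\,y^k,\qquad i=1,\dots,n,$$ holds on $\mathbb R^n\times(\mathbb R^n\setminus\{0\})$.
   Context: A Finsler function on $\mathbb R^n$ is $\mathcal F\colon\mathbb R^n\times\mathbb R^n\to\mathbb R$ smooth and positive on $\{(p,v):v\neq0\}$, positively $1$-homogeneous in $v$, and strongly convex ($\partial^2\mathcal F^2/\partial y^i\partial y^j$ positive definite for $v\ne0$). Summation over repeated indices. *)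

(* Defs.v *)
From Stdlib Require Import Reals ClassicalEpsilon.
From mathcomp Require Import ssreflect ssrfun ssrbool eqtype ssrnat seq fintype bigop.
Set Implicit Arguments.
Unset Strict Implicit.

Local Open Scope R_scope.

Definition vec (n : nat) := 'I_n -> R.
(* Points of T R^n = R^n x R^n, coordinates ((x^i),(y^i)) *)
Definition pt (n : nat) := (vec n * vec n)%type.
(* Coordinate directions: inl i = x^i, inr i = y^i *)
Definition dir (n : nat) := ('I_n + 'I_n)%type.

Definition coord n (z : pt n) (d : dir n) : R :=
  match d with inl i => z.1 i | inr i => z.2 i end.

Definition upd n (z : pt n) (d : dir n) (t : R) : pt n :=
  match d with
  | inl i => (fun j => if j == i then t else z.1 j, z.2)
  | inr i => (z.1, fun j => if j == i then t else z.2 j)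
  end.

Definition pder n (g : pt n -> R) (d : dir n) (z : pt n) : R :=
  epsilon (inhabits 0)
    (fun l => derivable_pt_lim (fun t => g (upd z d t)) (coord z d) l).

(* Iterated partial derivatives: the head of the list is applied last. *)
Fixpoint ipder n (g : pt n -> R) (l : list (dir n)) : pt n -> R :=
  match l with
  | nil => g
  | d :: l' => pder (ipder g l') d
  end.

Definition continuous_on n (U : pt n -> Prop) (g : pt n -> R) : Prop :=
  forall z, U z -> forall eps, 0 < eps -> exists del, 0 < del /\
    forall w, U w -> (forall d, Rabs (coord w d - coord z d) < del) ->
      Rabs (g w - g z) < eps.

Definition smooth_on n (U : pt n -> Prop) (g : pt n -> R) : Prop :=
  forall (l : list (dir n)),
    continuous_on U (ipder g l) /\
    forall d z, U z ->
      derivable_pt_lim (fun t => ipder g l (upd z d t)) (coord z d)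
        (ipder g (d :: l) z).

Definition slit n (z : pt n) : Prop := z.2 <> (fun _ => 0).

Definition uncurry n (F : vec n -> vec n -> R) : pt n -> R := fun z => F z.1 z.2.

Definition Fsq n (F : vec n -> vec n -> R) : pt n -> R := fun z => (F z.1 z.2) ^ 2.

Definition sumI n (f : 'I_n -> R) : R := \big[Rplus/0]_(i < n) f i.

Definition is_finsler n (F : vec n -> vec n -> R) : Prop :=
  smooth_on (@slit n) (uncurry F) /\
  (forall p v, v <> (fun _ => 0) -> 0 < F p v) /\
  (forall p v (lam : R), 0 < lam -> F p (fun i => lam * v i) = lam * F p v) /\
  (forall p v, v <> (fun _ => 0) ->
     forall w : vec n, w <> (fun _ => 0) ->
       0 < sumI (fun i => sumI (fun j =>
             ipder (Fsq F) [:: inr j; inr i] (p, v) * w i * w j))).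

Definition is_minkowski n (F : vec n -> vec n -> R) : Prop :=
  forall p q v, F p v = F q v.

(* d^2 F^2 / dx^a dy^b at z, i.e. d/dx^a (dF^2/dy^b) *)
Definition dxdy n (F : vec n -> vec n -> R) (a b : 'I_n) (z : pt n) : R :=
  ipder (Fsq F) [:: inl a; inr b] z.

(* Main.v *)
Require Import Defs.
From Stdlib Require Import Reals Lra ClassicalEpsilon FunctionalExtensionality Classical.
From HB Require Import structures.
From mathcomp Require Import ssreflect ssrfun ssrbool eqtype ssrnat seq fintype bigop.
From Coquelicot Require Import Coquelicot.
Set Implicit Arguments.
Unset Strict Implicit.
Local Open Scope R_scope.
Lemma Rplus_assoc' : associative Rplus. Proof. move=> *; ring. Qed.
Lemma Rmult_assoc' : associative Rmult. Proof. move=> *; ring. Qed.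
HB.instance Definition _ := Monoid.isComLaw.Build R 0 Rplus Rplus_assoc' Rplus_comm Rplus_0_l.
HB.instance Definition _ := Monoid.isComLaw.Build R 1 Rmult Rmult_assoc' Rmult_comm Rmult_1_l.
HB.instance Definition _ := Monoid.isMulLaw.Build R 0 Rmult Rmult_0_l Rmult_0_r.
HB.instance Definition _ := Monoid.isAddLaw.Build R Rmult Rplus Rmult_plus_distr_r Rmult_plus_distr_l.
Lemma sum_add n (f g : 'I_n -> R) : sumI (fun i => f i + g i) = sumI f + sumI g.
Proof. by rewrite /sumI big_split. Qed.
Lemma sum_scal n c (f : 'I_n -> R) : sumI (fun i => c * f i) = c * sumI f.
Proof. by rewrite /sumI big_distrr. Qed.
Lemma sum_exch n (f : 'I_n -> 'I_n -> R) : sumI (fun i => sumI (fun j => f i j)) = sumI (fun j => sumI (fun i => f i j)).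
Proof. by rewrite /sumI exchange_big. Qed.
Lemma sum_ind n (f : 'I_n -> R) i : sumI (fun k => if k == i then f k else 0) = f i.
Proof. rewrite /sumI (bigD1 i) //= eqxx big1 ?Rplus_0_r // => j /negbTE ->. done. Qed.

Lemma sum_deriv n (f : 'I_n -> R -> R) (l : 'I_n -> R) x :
  (forall k, derivable_pt_lim (f k) x (l k)) ->
  derivable_pt_lim (fun t => sumI (fun k => f k t)) x (sumI l).
Proof.
move=> H; rewrite /sumI.
elim: (index_enum _) => [|a r IH].
  rewrite big_nil.
  have -> : (fun t => \big[Rplus/0]_(k <- [::]) f k t) = fun _ => 0.
    by apply: functional_extensionality => t; rewrite big_nil.
  exact: derivable_pt_lim_const.
rewrite big_cons.
have -> : (fun t => \big[Rplus/0]_(k <- a :: r) f k t) =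
  (fun t => f a t + \big[Rplus/0]_(k <- r) f k t).
  by apply: functional_extensionality => t; rewrite big_cons.
exact: derivable_pt_lim_plus.
Qed.

Lemma sum0 n : sumI (fun _ : 'I_n => 0) = 0.
Proof. by rewrite /sumI big1. Qed.

Lemma sum_ext n (f g : 'I_n -> R) : (forall i, f i = g i) -> sumI f = sumI g.
Proof. by move=> H; rewrite /sumI; apply: eq_bigr => i _. Qed.

Lemma upd_upd n (z : pt n) d a b : upd (upd z d a) d b = upd z d b.
Proof.
case: d => i /=; congr pair; apply: functional_extensionality => j; by case: (j == i).
Qed.

Lemma coord_upd n (z : pt n) d t : coord (upd z d t) d = t.
Proof. by case: d => i /=; rewrite eqxx. Qed.

Lemma upd_coord n (z : pt n) d : upd z d (coord z d) = z.
Proof.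
case: z => x y; case: d => i /=; congr pair; apply: functional_extensionality => j;
by case: eqP => [->|].
Qed.

Lemma upd_comm n (z : pt n) k i a b :
  upd (upd z (inl k) a) (inr i) b = upd (upd z (inr i) b) (inl k) a.
Proof. by []. Qed.

Lemma slit_inl n (z : pt n) k a : slit (upd z (inl k) a) <-> slit z.
Proof. by []. Qed.

Lemma coord_upd_other n (z : pt n) d e t : d <> e -> coord (upd z d t) e = coord z e.
Proof.
case: d => i; case: e => j //= H; case: eqP => // E; subst; by exfalso; apply: H.
Qed.

Lemma pder_val n (g : pt n -> R) d z l :
  derivable_pt_lim (fun t => g (upd z d t)) (coord z d) l -> pder g d z = l.
Proof.
move=> H; rewrite /pder.
have := epsilon_spec (inhabits 0) (fun l => derivable_pt_lim (fun t => g (upd z d t)) (coord z d) l) (ex_intro _ l H).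
move=> H2; exact: (uniqueness_limite _ _ _ _ H2 H).
Qed.

Lemma deriv_loc (f g : R -> R) x l :
  (exists eta, 0 < eta /\ forall t, Rabs (t - x) < eta -> f t = g t) ->
  derivable_pt_lim f x l -> derivable_pt_lim g x l.
Proof.
move=> [eta [Heta Hfg]] H eps Heps.
have [del Hdel] := H eps Heps.
have Hp : 0 < Rmin del eta by apply: Rmin_pos => //; apply: cond_pos.
exists (mkposreal _ Hp) => h Hh Hlt /=.
rewrite -!Hfg; first by apply: Hdel => //; apply: Rlt_le_trans Hlt _; apply: Rmin_l.
  by rewrite /Rminus Rplus_opp_r Rabs_R0.
have -> : x + h - x = h by ring.
by apply: Rlt_le_trans Hlt _; apply: Rmin_r.
Qed.

Lemma deriv_sq (f : R -> R) x l : derivable_pt_lim f x l ->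
  derivable_pt_lim (fun t => (f t) ^ 2) x (2 * f x * l).
Proof.
move=> H.
have -> : (fun t => f t ^ 2) = (fun t => f t * f t).
  by apply: functional_extensionality => t; ring.
have -> : 2 * f x * l = l * f x + f x * l by ring.
exact: derivable_pt_lim_mult.
Qed.

Lemma slit_open n (z : pt n) : slit z -> exists del, 0 < del /\
  forall w : pt n, (forall j, Rabs (w.2 j - z.2 j) < del) -> slit w.
Proof.
move=> Hz.
have [j Hj] : exists j, z.2 j <> 0.
  apply: NNPP => H; apply: Hz; apply: functional_extensionality => j.
  apply: NNPP => H2; apply: H; by exists j.
exists (Rabs (z.2 j)); split; first exact: Rabs_pos_lt.
move=> w Hw Hw0; have := Hw j; rewrite Hw0 /= Rminus_0_l Rabs_Ropp; lra.
Qed.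

Lemma mvt2 (f f' : R -> R) a b :
  (forall s, Rabs (s - a) <= Rabs (b - a) -> derivable_pt_lim f s (f' s)) ->
  exists s, Rabs (s - a) <= Rabs (b - a) /\ f b - f a = f' s * (b - a).
Proof.
move=> H.
case: (total_order_T a b) => [[Hab|Hab]|Hab].
- have [c [Hc1 Hc2]] := MVT_cor2 f f' a b Hab (fun c Hc => H c ltac:(rewrite !Rabs_right; lra)).
  exists c; split => //; rewrite !Rabs_right; lra.
- subst; exists b; split; first lra. ring.
- have [c [Hc1 Hc2]] := MVT_cor2 f f' b a Hab (fun c Hc => H c ltac:(rewrite !Rabs_left1; lra)).
  exists c; split; first (rewrite !Rabs_left1; lra). lra.
Qed.

Lemma sum_ge_term n (f : 'I_n -> R) j : (forall i, 0 <= f i) -> f j <= sumI f.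
Proof.
move=> H; rewrite /sumI (bigD1 j) //=.
rewrite -{1}[f j]Rplus_0_r; apply: Rplus_le_compat_l.
apply: (big_ind (fun x => 0 <= x)) => //; [lra | move=> x y; lra].
Qed.

Definition Pm n (z : pt n) (w : vec n) (m : nat) (t : R) : pt n :=
  (z.1, fun j : 'I_n => if (j < m)%N then z.2 j + t * w j else z.2 j).

Lemma Pm0 n (z : pt n) w m : Pm z w m 0 = z.
Proof.
case: z => x y; rewrite /Pm /=; congr pair; apply: functional_extensionality => j.
case: (j < m)%N => //; ring.
Qed.

Definition D1 n (g : pt n -> R) k := ipder g [:: inr k].

Lemma chain_step n (g : pt n -> R)
  (Hd : forall k w, slit w -> derivable_pt_lim (fun t => g (upd w (inr k) t)) (coord w (inr k)) (ipder g [:: inr k] w))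
  (Hc : forall k, Defs.continuous_on (@slit n) (ipder g [:: inr k])) z w (o : 'I_n) :
  slit z ->
  derivable_pt_lim (fun t => g (upd (Pm z w o t) (inr o) (z.2 o + t * w o)) - g (Pm z w o t)) 0
    (w o * ipder g [:: inr o] z).
Proof.
move=> Hz eps Heps.
have [del1 [Hdel1 Hsl]] := slit_open Hz.
have Heps' : 0 < eps / (Rabs (w o) + 1).
  apply: Rdiv_lt_0_compat => //; have := Rabs_pos (w o); lra.
have [del2 [Hdel2 Hcz]] := Hc o z Hz _ Heps'.
set M := 1 + sumI (fun j => Rabs (w j)).
have HwM : forall j, Rabs (w j) <= M.
  move=> j; rewrite /M; have H0 := @sum_ge_term n (fun j => Rabs (w j)) j (fun i => Rabs_pos _); simpl in H0; lra.
have HM : 0 < M by rewrite /M; have H0 := @sum_ge_term n (fun j => Rabs (w j)) o (fun i => Rabs_pos _); simpl in H0; have := Rabs_pos (w o); lra.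
have Hmin : 0 < Rmin del1 del2 by apply: Rmin_pos.
have Hdelta : 0 < Rmin del1 del2 / M by apply: Rdiv_lt_0_compat.
exists (mkposreal _ Hdelta) => h Hh Hlt; simpl in Hlt.
rewrite Rplus_0_l Pm0 Rmult_0_l Rplus_0_r.
have -> : upd z (inr o) (z.2 o) = z by exact: (upd_coord z (inr o)).
set Q := Pm z w o h.
have HQo : Q.2 o = z.2 o by rewrite /Q /Pm /= ltnn.
have HgQ : g Q = g (upd Q (inr o) (z.2 o)) by rewrite -HQo (upd_coord Q (inr o)).
have HhM : Rabs h * M < Rmin del1 del2.
  have := Hlt; move=> Hl; apply: (Rmult_lt_reg_r (/ M)); first exact: Rinv_0_lt_compat.
  rewrite Rmult_assoc Rinv_r ?Rmult_1_r; [exact: Hl | lra].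
have Hcoord : forall s, Rabs (s - z.2 o) <= Rabs (z.2 o + h * w o - z.2 o) ->
    (forall d, Rabs (coord (upd Q (inr o) s) d - coord z d) <= Rabs h * M).
  move=> s Hs [j|j] /=.
  - rewrite /Rminus Rplus_opp_r Rabs_R0; have := Rabs_pos h; nra.
  - case: eqP => [->|_].
      apply: (Rle_trans _ _ _ Hs).
      have -> : z.2 o + h * w o - z.2 o = h * w o by ring.
      rewrite Rabs_mult; have := Rabs_pos h; have := HwM o; nra.
    case: (j < o)%N.
      have -> : z.2 j + h * w j - z.2 j = h * w j by ring.
      rewrite Rabs_mult; have := Rabs_pos h; have := HwM j; nra.
    rewrite /Rminus Rplus_opp_r Rabs_R0; have := Rabs_pos h; nra.
have Hslit : forall s, Rabs (s - z.2 o) <= Rabs (z.2 o + h * w o - z.2 o) -> slit (upd Q (inr o) s).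
  move=> s Hs; apply: Hsl => j.
  have := Hcoord s Hs (inr j) => /= H1.
  apply: (Rle_lt_trans _ _ _ H1); apply: (Rlt_le_trans _ _ _ HhM); apply: Rmin_l.
have Hder : forall s, Rabs (s - z.2 o) <= Rabs (z.2 o + h * w o - z.2 o) ->
   derivable_pt_lim (fun s => g (upd Q (inr o) s)) s (ipder g [:: inr o] (upd Q (inr o) s)).
  move=> s Hs; have := Hd o _ (Hslit s Hs); rewrite coord_upd.
  have -> : (fun t => g (upd (upd Q (inr o) s) (inr o) t)) = (fun t => g (upd Q (inr o) t)).
    by apply: functional_extensionality => t; rewrite upd_upd.
  done.
have [s [Hs Hmvt]] := @mvt2 (fun s => g (upd Q (inr o) s)) (fun s => ipder g [:: inr o] (upd Q (inr o) s))
  (z.2 o) (z.2 o + h * w o) Hder.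
have -> : g z - g z = 0 by ring.
rewrite Rminus_0_r HgQ Hmvt.
have -> : z.2 o + h * w o - z.2 o = h * w o by ring.
have -> : ipder g [:: inr o] (upd Q (inr o) s) * (h * w o) / h - w o * ipder g [:: inr o] z
   = w o * (ipder g [:: inr o] (upd Q (inr o) s) - ipder g [:: inr o] z) by field.
rewrite Rabs_mult.
have Hc2 : Rabs (ipder g [:: inr o] (upd Q (inr o) s) - ipder g [:: inr o] z) < eps / (Rabs (w o) + 1).
  apply: Hcz; first exact: Hslit.
  move=> d; apply: (Rle_lt_trans _ _ _ (Hcoord s Hs d)); apply: (Rlt_le_trans _ _ _ HhM); apply: Rmin_r.
have Hwo := Rabs_pos (w o).
have Hfac : Rabs (w o) * (eps / (Rabs (w o) + 1)) < eps.
  have -> : Rabs (w o) * (eps / (Rabs (w o) + 1)) = eps * (Rabs (w o) / (Rabs (w o) + 1)) by field; lra.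
  have : Rabs (w o) / (Rabs (w o) + 1) < 1.
    apply: (Rmult_lt_reg_r (Rabs (w o) + 1)); first lra.
    rewrite /Rdiv Rmult_assoc Rinv_l; lra.
  nra.
have := Rabs_pos (ipder g [:: inr o] (upd Q (inr o) s) - ipder g [:: inr o] z).
nra.
Qed.

Lemma Pm_0m n (z : pt n) w t : Pm z w 0 t = z.
Proof.
case: z => x y; rewrite /Pm /=; congr pair.
Qed.

Lemma chain n (g : pt n -> R)
  (Hd : forall k w, slit w -> derivable_pt_lim (fun t => g (upd w (inr k) t)) (coord w (inr k)) (ipder g [:: inr k] w))
  (Hc : forall k, Defs.continuous_on (@slit n) (ipder g [:: inr k])) z w :
  slit z ->
  derivable_pt_lim (fun t => g (z.1, fun j => z.2 j + t * w j)) 0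
    (sumI (fun k => w k * ipder g [:: inr k] z)).
Proof.
move=> Hz.
suff H : forall m, derivable_pt_lim (fun t => g (Pm z w m t)) 0
    (sumI (fun k => if (k < m)%N then w k * ipder g [:: inr k] z else 0)).
  have := H n.
  have -> : (fun t => g (Pm z w n t)) = (fun t => g (z.1, fun j => z.2 j + t * w j)).
    apply: functional_extensionality => t; rewrite /Pm; congr (g (_, _)).
    by apply: functional_extensionality => j; rewrite ltn_ord.
  by rewrite (@sum_ext _ _ (fun k => w k * ipder g [:: inr k] z)) // => k; rewrite ltn_ord.
elim=> [|m IH].
  rewrite (@sum_ext _ _ (fun _ => 0)) ?sum0; last by move=> k; rewrite ltn0.
  have -> : (fun t => g (Pm z w 0 t)) = fun _ => g z.
    by apply: functional_extensionality => t; rewrite Pm_0m.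
  exact: derivable_pt_lim_const.
case: (ltnP m n) => Hmn.
  set o := Ordinal Hmn.
  have HP : forall t, Pm z w m.+1 t = upd (Pm z w o t) (inr o) (z.2 o + t * w o).
    move=> t; rewrite /Pm /=; congr pair; apply: functional_extensionality => j.
    rewrite ltnS leq_eqVlt; case: (j =P o) => [->|Hne]; first by rewrite /= eqxx.
    have -> : (nat_of_ord j == m) = false.
      by apply/eqP => E; apply: Hne; apply: val_inj.
    done.
  have -> : (fun t => g (Pm z w m.+1 t)) =
    (fun t => (g (upd (Pm z w o t) (inr o) (z.2 o + t * w o)) - g (Pm z w m t)) + g (Pm z w m t)).
    by apply: functional_extensionality => t; rewrite HP; ring.
  rewrite (@sum_ext _ _ (fun k => (if k == o then w k * ipder g [:: inr k] z else 0) +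
        (if (k < m)%N then w k * ipder g [:: inr k] z else 0))); last first.
    move=> k; rewrite ltnS leq_eqVlt.
    case: (k =P o) => [->|Hne]; first by rewrite /= eqxx ltnn /=; ring.
    have -> : (nat_of_ord k == m) = false.
      by apply/eqP => E; apply: Hne; apply: val_inj.
    simpl; ring.
  rewrite sum_add (@sum_ind _ (fun k => w k * ipder g [:: inr k] z)).
  apply: derivable_pt_lim_plus => //.
  exact: chain_step.
have -> : (fun t => g (Pm z w m.+1 t)) = (fun t => g (Pm z w m t)).
  apply: functional_extensionality => t; rewrite /Pm; congr (g (_, _)).
  apply: functional_extensionality => j.
  have Hj : (j < m)%N by apply: leq_trans (ltn_ord j) Hmn.
  by rewrite ltnS (ltnW Hj) Hj.
rewrite (@sum_ext _ _ (fun k => if (k < m)%N then w k * ipder g [:: inr k] z else 0)) //.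
move=> k; have Hk : (k < m)%N by apply: leq_trans (ltn_ord k) Hmn.
by rewrite ltnS (ltnW Hk) Hk.
Qed.

Definition pp n (z : pt n) k i u v : pt n := upd (upd z (inl k) u) (inr i) v.

Lemma pp_inl n (z : pt n) k i u v t : upd (pp z k i u v) (inl k) t = pp z k i t v.
Proof.
rewrite /pp /=; congr pair; apply: functional_extensionality => j; by case: (j == k).
Qed.

Lemma pp_inr n (z : pt n) k i u v t : upd (pp z k i u v) (inr i) t = pp z k i u t.
Proof.
rewrite /pp /=; congr pair; apply: functional_extensionality => j; by case: (j == i).
Qed.

Lemma pp_coordl n (z : pt n) k i u v : coord (pp z k i u v) (inl k) = u.
Proof. by rewrite /pp /= eqxx. Qed.

Lemma pp_coordr n (z : pt n) k i u v : coord (pp z k i u v) (inr i) = v.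
Proof. by rewrite /pp /= eqxx. Qed.

Lemma pp_z n (z : pt n) k i : pp z k i (z.1 k) (z.2 i) = z.
Proof.
rewrite /pp.
have -> : upd z (inl k) (z.1 k) = z by exact: (upd_coord z (inl k)).
exact: (upd_coord z (inr i)).
Qed.

Lemma is_derive_D f x l : derivable_pt_lim f x l -> Derive f x = l.
Proof. by move=> H; apply: is_derive_unique; apply/is_derive_Reals. Qed.

Lemma ex_derive_D f x l : derivable_pt_lim f x l -> ex_derive f x.
Proof. by move=> H; exists l; apply/is_derive_Reals. Qed.

Lemma schwarz_g n (g : pt n -> R) (Hs : smooth_on (@slit n) g) z k i :
  slit z -> ipder g [:: inr i; inl k] z = ipder g [:: inl k; inr i] z.
Proof.
move=> Hz.
have [del0 [Hdel0 Hsl]] := slit_open Hz.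
have Hslp : forall u v, Rabs (v - z.2 i) < del0 -> slit (pp z k i u v).
  move=> u v Hv; apply: Hsl => j /=; case: eqP => [->//|_].
  by rewrite /Rminus Rplus_opp_r Rabs_R0.
set f := fun u v => g (pp z k i u v).
have D1v : forall u v, Rabs (v - z.2 i) < del0 ->
    derivable_pt_lim (fun t => f u t) v (ipder g [:: inr i] (pp z k i u v)).
  move=> u v Hv; have := (Hs [::]).2 (inr i) _ (Hslp u v Hv).
  rewrite pp_coordr /f /=.
  by have -> : (fun t => g (upd (pp z k i u v) (inr i) t)) = (fun t => g (pp z k i u t))
    by apply: functional_extensionality => t; rewrite pp_inr.
have D1u : forall u v, Rabs (v - z.2 i) < del0 ->
    derivable_pt_lim (fun t => f t v) u (ipder g [:: inl k] (pp z k i u v)).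
  move=> u v Hv; have := (Hs [::]).2 (inl k) _ (Hslp u v Hv).
  rewrite pp_coordl /f /=.
  by have -> : (fun t => g (upd (pp z k i u v) (inl k) t)) = (fun t => g (pp z k i t v))
    by apply: functional_extensionality => t; rewrite pp_inl.
have D2a : forall u v, Rabs (v - z.2 i) < del0 ->
    derivable_pt_lim (fun u' => Derive (fun t => f u' t) v) u (ipder g [:: inl k; inr i] (pp z k i u v)).
  move=> u v Hv.
  have -> : (fun u' => Derive (fun t => f u' t) v) = (fun u' => ipder g [:: inr i] (upd (pp z k i u v) (inl k) u')).
    by apply: functional_extensionality => u'; rewrite pp_inl; apply: is_derive_D; apply: D1v.
  have := (Hs [:: inr i]).2 (inl k) _ (Hslp u v Hv).
  by rewrite pp_coordl.
have D2b : forall u v, Rabs (v - z.2 i) < del0 ->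
    derivable_pt_lim (fun v' => Derive (fun t => f t v') u) v (ipder g [:: inr i; inl k] (pp z k i u v)).
  move=> u v Hv.
  apply: (@deriv_loc (fun v' => ipder g [:: inl k] (upd (pp z k i u v) (inr i) v'))).
    exists (del0 - Rabs (v - z.2 i)); split; first lra.
    move=> t Ht; rewrite pp_inr; symmetry; apply: is_derive_D; apply: D1u.
    have := Rabs_triang (t - v) (v - z.2 i).
    have -> : t - v + (v - z.2 i) = t - z.2 i by ring.
    lra.
  have := (Hs [:: inl k]).2 (inr i) _ (Hslp u v Hv).
  by rewrite pp_coordr.
have Hpos : 0 < del0 by [].
have Hcont : forall l, (l = [:: inl k; inr i] \/ l = [:: inr i; inl k]) ->
   forall eps : posreal, exists del : posreal, forall u v, Rabs (u - z.1 k) < del -> Rabs (v - z.2 i) < del ->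
     Rabs (ipder g l (pp z k i u v) - ipder g l z) < eps.
  move=> l _ eps.
  have [del [Hdel Hc]] := (Hs l).1 z Hz eps (cond_pos eps).
  have Hm : 0 < Rmin del del0 by apply: Rmin_pos.
  exists (mkposreal _ Hm) => u v Hu Hv; simpl in Hu, Hv.
  apply: Hc; first by apply: Hslp; apply: Rlt_le_trans Hv _; apply: Rmin_r.
  move=> [j|j] /=; case: eqP => [->|_].
  - by apply: Rlt_le_trans Hu _; apply: Rmin_l.
  - by rewrite /Rminus Rplus_opp_r Rabs_R0.
  - by apply: Rlt_le_trans Hv _; apply: Rmin_l.
  - by rewrite /Rminus Rplus_opp_r Rabs_R0.
have HS := @Schwarz f (z.1 k) (z.2 i).
have L : Derive (fun u => Derive (fun t => f u t) (z.2 i)) (z.1 k) = ipder g [:: inl k; inr i] z.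
  rewrite -{3}(pp_z z k i); apply: is_derive_D; apply: D2a.
  by rewrite /Rminus Rplus_opp_r Rabs_R0.
have Rr : Derive (fun v => Derive (fun t => f t v) (z.1 k)) (z.2 i) = ipder g [:: inr i; inl k] z.
  rewrite -{3}(pp_z z k i); apply: is_derive_D; apply: D2b.
  by rewrite /Rminus Rplus_opp_r Rabs_R0.
rewrite -L -Rr; symmetry; apply: HS.
- exists (mkposreal _ Hpos) => u v _ Hv; simpl in Hv.
  split; first exact: ex_derive_D (D1u u v Hv).
  split; first exact: ex_derive_D (D1v u v Hv).
  split; first exact: ex_derive_D (D2a u v Hv).
  exact: ex_derive_D (D2b u v Hv).
- move=> eps.
  have [del Hd] := Hcont _ (or_introl erefl) eps.
  have Hm : 0 < Rmin del del0 by apply: Rmin_pos; [apply: cond_pos | done].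
  exists (mkposreal _ Hm) => u v Hu Hv; simpl in Hu, Hv.
  have Hv0 : Rabs (v - z.2 i) < del0 by apply: Rlt_le_trans Hv _; apply: Rmin_r.
  rewrite (is_derive_D (D2a u v Hv0)) L.
  apply: Hd; [apply: Rlt_le_trans Hu _ | apply: Rlt_le_trans Hv _]; apply: Rmin_l.
- move=> eps.
  have [del Hd] := Hcont _ (or_intror erefl) eps.
  have Hm : 0 < Rmin del del0 by apply: Rmin_pos; [apply: cond_pos | done].
  exists (mkposreal _ Hm) => u v Hu Hv; simpl in Hu, Hv.
  have Hv0 : Rabs (v - z.2 i) < del0 by apply: Rlt_le_trans Hv _; apply: Rmin_r.
  rewrite /= (is_derive_D (D2b u v Hv0)) Rr.
  apply: Hd; [apply: Rlt_le_trans Hu _ | apply: Rlt_le_trans Hv _]; apply: Rmin_l.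
Qed.

Lemma deriv_scal (f : R -> R) c x l : derivable_pt_lim f x l ->
  derivable_pt_lim (fun t => c * f t) x (c * l).
Proof. move=> H; exact: (derivable_pt_lim_scal f c x l H). Qed.

Lemma deriv_mul (f h : R -> R) x lf lh : derivable_pt_lim f x lf -> derivable_pt_lim h x lh ->
  derivable_pt_lim (fun t => f t * h t) x (lf * h x + f x * lh).
Proof. move=> H1 H2; exact: (derivable_pt_lim_mult f h x lf lh H1 H2). Qed.

Lemma const_of_d0 (f : R -> R) a b : (forall t, derivable_pt_lim f t 0) -> f a = f b.
Proof.
move=> H; have [s [_ Hs]] := @mvt2 f (fun _ => 0) a b (fun s _ => H s).
lra.
Qed.

Lemma pder_const n (g : pt n -> R) d z c : (forall t, g (upd z d t) = c) -> pder g d z = 0.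
Proof.
move=> H; apply: pder_val.
have -> : (fun t => g (upd z d t)) = fun _ => c by apply: functional_extensionality.
exact: derivable_pt_lim_const.
Qed.


Lemma dxdy_eq n (F : vec n -> vec n -> R) (Hsm : smooth_on (@slit n) (uncurry F)) a b z :
  slit z -> dxdy F a b z =
  2 * (ipder (uncurry F) [:: inl a] z * ipder (uncurry F) [:: inr b] z +
       uncurry F z * ipder (uncurry F) [:: inl a; inr b] z).
Proof.
move=> Hz.
have H1 : forall w, slit w -> pder (Fsq F) (inr b) w = 2 * uncurry F w * ipder (uncurry F) [:: inr b] w.
  move=> w Hw; apply: pder_val.
  have := deriv_sq ((Hsm [::]).2 (inr b) w Hw).
  by rewrite (upd_coord w (inr b)).
rewrite /dxdy /=; apply: pder_val.
have -> : (fun t => pder (Fsq F) (inr b) (upd z (inl a) t)) =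
  (fun t => (2 * uncurry F (upd z (inl a) t)) * ipder (uncurry F) [:: inr b] (upd z (inl a) t)).
  by apply: functional_extensionality => t; rewrite H1.
have := deriv_mul (deriv_scal 2 ((Hsm [::]).2 (inl a) z Hz)) ((Hsm [:: inr b]).2 (inl a) z Hz).
rewrite (upd_coord z (inl a)) /= => H.
have -> : 2 * (pder (uncurry F) (inl a) z * pder (uncurry F) (inr b) z +
   uncurry F z * pder (pder (uncurry F) (inr b)) (inl a) z) =
   2 * pder (uncurry F) (inl a) z * pder (uncurry F) (inr b) z +
   2 * uncurry F z * pder (pder (uncurry F) (inr b)) (inl a) z by ring.
exact: H.
Qed.

Lemma euler n (F : vec n -> vec n -> R) (Hsm : smooth_on (@slit n) (uncurry F))
  (Hhom : forall p v (lam : R), 0 < lam -> F p (fun i => lam * v i) = lam * F p v) z :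
  slit z -> sumI (fun k => z.2 k * ipder (uncurry F) [:: inr k] z) = uncurry F z.
Proof.
move=> Hz.
have Hch := @chain n (uncurry F) (fun k w Hw => (Hsm [::]).2 (inr k) w Hw)
   (fun k => (Hsm [:: inr k]).1) z z.2 Hz.
have Hlin : derivable_pt_lim (fun t => (1 + t) * uncurry F z) 0 (uncurry F z).
  apply/is_derive_Reals; auto_derive => //; ring.
have H2 : derivable_pt_lim (fun t => (1 + t) * uncurry F z) 0
    (sumI (fun k => z.2 k * ipder (uncurry F) [:: inr k] z)).
  apply: (deriv_loc _ Hch); exists 1; split; first lra.
  move=> t Ht; rewrite /uncurry /=.
  have -> : (fun j => z.2 j + t * z.2 j) = (fun j => (1 + t) * z.2 j).
    by apply: functional_extensionality => j; ring.
  apply: Hhom; rewrite Rminus_0_r in Ht; have := Rabs_def2 _ _ Ht; lra.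
exact: (uniqueness_limite _ _ _ _ H2 Hlin).
Qed.

Lemma euler_x n (F : vec n -> vec n -> R) (Hsm : smooth_on (@slit n) (uncurry F))
  (Hhom : forall p v (lam : R), 0 < lam -> F p (fun i => lam * v i) = lam * F p v) z i :
  slit z -> sumI (fun k => z.2 k * ipder (uncurry F) [:: inl i; inr k] z) = ipder (uncurry F) [:: inl i] z.
Proof.
move=> Hz.
have H1 : derivable_pt_lim (fun t => sumI (fun k => z.2 k * ipder (uncurry F) [:: inr k] (upd z (inl i) t)))
   (coord z (inl i)) (sumI (fun k => z.2 k * ipder (uncurry F) [:: inl i; inr k] z)).
  apply: sum_deriv => k; apply: deriv_scal; exact: ((Hsm [:: inr k]).2 (inl i) z Hz).
have E : (fun t => sumI (fun k => z.2 k * ipder (uncurry F) [:: inr k] (upd z (inl i) t))) =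
   (fun t => uncurry F (upd z (inl i) t)).
  apply: functional_extensionality => t.
  exact: (@euler n F Hsm Hhom (upd z (inl i) t) Hz).
rewrite E in H1.
exact: (uniqueness_limite _ _ _ _ H1 ((Hsm [::]).2 (inl i) z Hz)).
Qed.

Lemma stepB n (F : vec n -> vec n -> R) (Hsm : smooth_on (@slit n) (uncurry F))
  (HS0 : forall w, slit w -> sumI (fun k => w.2 k * ipder (uncurry F) [:: inl k] w) = 0) z i :
  slit z -> ipder (uncurry F) [:: inl i] z + sumI (fun k => z.2 k * ipder (uncurry F) [:: inr i; inl k] z) = 0.
Proof.
move=> Hz.
set G := uncurry F.
have Hf : forall k x, derivable_pt_lim (fun t => (upd z (inr i) t).2 k) x (if k == i then 1 else 0).
  move=> k x /=; case: (k =P i) => _; [exact: derivable_pt_lim_id | exact: derivable_pt_lim_const].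
have H1 : derivable_pt_lim (fun t => sumI (fun k => (upd z (inr i) t).2 k * ipder G [:: inl k] (upd z (inr i) t)))
   (coord z (inr i)) (sumI (fun k => (if k == i then ipder G [:: inl k] z else 0) + z.2 k * ipder G [:: inr i; inl k] z)).
  apply: sum_deriv => k.
  have := deriv_mul (Hf k (coord z (inr i))) ((Hsm [:: inl k]).2 (inr i) z Hz).
  rewrite (upd_coord z (inr i)).
  by case: (k =P i) => [->|_] /=; rewrite ?Rmult_1_l ?Rmult_0_l ?Rplus_0_l.
have [del [Hdel Hsl]] := slit_open Hz.
have H2 : derivable_pt_lim (fun t => sumI (fun k => (upd z (inr i) t).2 k * ipder G [:: inl k] (upd z (inr i) t)))
   (coord z (inr i)) 0.
  apply: (@deriv_loc (fun _ => 0)); last exact: derivable_pt_lim_const.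
  exists del; split => // t Ht; symmetry; apply: HS0; apply: Hsl => j /=.
  case: eqP => [->//|_]; by rewrite /Rminus Rplus_opp_r Rabs_R0.
have := uniqueness_limite _ _ _ _ H1 H2.
rewrite sum_add.
by rewrite (@sum_ind _ (fun k => ipder G [:: inl k] z)).
Qed.

Lemma reverse n (F : vec n -> vec n -> R) : is_finsler F ->
  (forall (p v : vec n), v <> (fun _ => 0) -> forall i : 'I_n,
        sumI (fun k => dxdy F k i (p, v) * v k) = 1 / 2 * sumI (fun k => dxdy F i k (p, v) * v k)) ->
  forall z i, slit z -> ipder (uncurry F) [:: inl i] z = 0.
Proof.
move=> [Hsm [Hpos [Hhom _]]] HC.
set G := uncurry F.
set S := fun w : pt n => sumI (fun k => w.2 k * ipder G [:: inl k] w).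
have Eq : forall z, slit z -> forall i,
   2 * ipder G [:: inr i] z * S z + 2 * G z * sumI (fun k => z.2 k * ipder G [:: inl k; inr i] z)
   = 2 * G z * ipder G [:: inl i] z.
  move=> [p v] Hz i.
  have := HC p v Hz i.
  rewrite (@sum_ext _ _ (fun k => (2 * ipder G [:: inr i] (p, v)) * (v k * ipder G [:: inl k] (p, v)) +
     (2 * G (p, v)) * (v k * ipder G [:: inl k; inr i] (p, v)))); last first.
    by move=> k; rewrite (dxdy_eq Hsm) //; rewrite /G; ring.
  rewrite (@sum_ext _ (fun k => dxdy F i k (p, v) * v k)
     (fun k => (2 * ipder G [:: inl i] (p, v)) * (v k * ipder G [:: inr k] (p, v)) +
     (2 * G (p, v)) * (v k * ipder G [:: inl i; inr k] (p, v)))); last first.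
    by move=> k; rewrite (dxdy_eq Hsm) //; rewrite /G; ring.
  rewrite !sum_add !sum_scal.
  have E1 := @euler n F Hsm Hhom (p, v) Hz.
  have E2 := @euler_x n F Hsm Hhom (p, v) i Hz.
  simpl in E1, E2; rewrite /G E1 E2 /S /=.
  move=> H; rewrite /G in H *; rewrite H; field.
have HS0 : forall z, slit z -> S z = 0.
  move=> z Hz.
  have Hsum : sumI (fun i => z.2 i * (2 * ipder G [:: inr i] z * S z + 2 * G z * sumI (fun k => z.2 k * ipder G [:: inl k; inr i] z)))
     = sumI (fun i => z.2 i * (2 * G z * ipder G [:: inl i] z)).
    by apply: sum_ext => i; rewrite Eq.
  rewrite (@sum_ext _ _ (fun i => (2 * S z) * (z.2 i * ipder G [:: inr i] z) +
      (2 * G z) * sumI (fun k => z.2 i * (z.2 k * ipder G [:: inl k; inr i] z)))) in Hsum; last first.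
    move=> i; rewrite (sum_scal (z.2 i) (fun k => z.2 k * ipder G [:: inl k; inr i] z)); ring.
  rewrite (@sum_ext _ (fun i => z.2 i * (2 * G z * ipder G [:: inl i] z)) (fun i => (2 * G z) * (z.2 i * ipder G [:: inl i] z))) in Hsum; last first.
    by move=> i; ring.
  rewrite sum_add !sum_scal sum_exch in Hsum.
  rewrite (@sum_ext _ (fun k => sumI (fun i => z.2 i * (z.2 k * ipder G [:: inl k; inr i] z))) (fun k => z.2 k * ipder G [:: inl k] z)) in Hsum; last first.
    move=> k; rewrite (@sum_ext _ _ (fun i => z.2 k * (z.2 i * ipder G [:: inl k; inr i] z))); last by move=> i; ring.
    by rewrite sum_scal (@euler_x n F Hsm Hhom z k Hz).
  rewrite (@euler n F Hsm Hhom z Hz) in Hsum.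
  have HG : 0 < G z by apply: Hpos.
  change (sumI (fun k => z.2 k * ipder G [:: inl k] z)) with (S z) in Hsum.
  change (uncurry F z) with (G z) in Hsum.
  have : G z * S z = 0 by nra.
  case/Rmult_integral => //; lra.
move=> z i Hz.
have HB := @stepB n F Hsm HS0 z i Hz.
rewrite (@sum_ext _ _ (fun k => z.2 k * ipder G [:: inl k; inr i] z)) in HB; last first.
  by move=> k; rewrite (@schwarz_g n G Hsm z k i Hz).
have := Eq z Hz i; rewrite HS0 //.
have HG : 0 < G z by apply: Hpos.
move=> H.
change (ipder (uncurry F) [:: inl i] z) with (ipder G [:: inl i] z) in HB.
have HS : sumI (fun k => z.2 k * ipder G [:: inl k; inr i] z) = - ipder G [:: inl i] z by lra.
rewrite HS in H.
have : G z * ipder G [:: inl i] z = 0 by nra.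
case/Rmult_integral => //; lra.
Qed.

Lemma F_zero n (F : vec n -> vec n -> R) :
  (forall p v (lam : R), 0 < lam -> F p (fun i => lam * v i) = lam * F p v) ->
  forall p, F p (fun _ => 0) = 0.
Proof.
move=> Hhom p.
have := Hhom p (fun _ => 0) 2 ltac:(lra).
have -> : (fun i : 'I_n => 2 * (fun _ : 'I_n => 0) i) = (fun _ => 0).
  by apply: functional_extensionality => i; ring.
lra.
Qed.

Lemma mink_of n (F : vec n -> vec n -> R) : is_finsler F ->
  (forall z i, slit z -> ipder (uncurry F) [:: inl i] z = 0) -> is_minkowski F.
Proof.
move=> [Hsm [Hpos [Hhom _]]] H0 p q v.
case: (classic (v = fun _ => 0)) => [->|Hv]; first by rewrite !F_zero.
set r := fun m (j : 'I_n) => if (j < m)%N then q j else p j.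
suff : forall m, F (r m) v = F p v.
  move=> /(_ n); rewrite /r.
  have -> : (fun j : 'I_n => if (j < n)%N then q j else p j) = q.
    by apply: functional_extensionality => j; rewrite ltn_ord.
  by move=> ->.
elim=> [|m IH].
  rewrite /r; have -> : (fun j : 'I_n => if (j < 0)%N then q j else p j) = p.
    by apply: functional_extensionality => j; rewrite ltn0.
  done.
case: (ltnP m n) => Hmn.
  set o := Ordinal Hmn.
  have Er : r m.+1 = (upd (r m, v) (inl o) (q o)).1.
    rewrite /r /=; apply: functional_extensionality => j.
    rewrite ltnS leq_eqVlt; case: (j =P o) => [->|Hne]; first by rewrite /= eqxx.
    have -> : (nat_of_ord j == m) = false.
      by apply/eqP => E; apply: Hne; apply: val_inj.
    done.
  rewrite Er -IH.
  have Hd : forall t, derivable_pt_lim (fun s => uncurry F (upd (r m, v) (inl o) s)) t 0.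
    move=> t.
    have := (Hsm [::]).2 (inl o) (upd (r m, v) (inl o) t) Hv.
    rewrite coord_upd H0 //.
    have -> : (fun s => ipder (uncurry F) [::] (upd (upd (r m, v) (inl o) t) (inl o) s)) =
       (fun s => uncurry F (upd (r m, v) (inl o) s)).
      by apply: functional_extensionality => s; rewrite upd_upd.
    done.
  have := const_of_d0 (q o) ((r m) o) Hd.
  move=> E; change (uncurry F (upd (r m, v) (inl o) (q o)) = uncurry F (r m, v)).
  rewrite E; congr (uncurry F _); exact: (upd_coord (r m, v) (inl o)).
rewrite /r; have -> : (fun j : 'I_n => if (j < m.+1)%N then q j else p j) =
   (fun j : 'I_n => if (j < m)%N then q j else p j).
  apply: functional_extensionality => j.
  have Hj : (j < m)%N by apply: leq_trans (ltn_ord j) Hmn.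
  by rewrite ltnS (ltnW Hj) Hj.
exact: IH.
Qed.

Theorem mainTheorem9 (n : nat) (F : vec n -> vec n -> R) :
  is_finsler F ->
  (is_minkowski F <->
   (forall (p v : vec n), v <> (fun _ => 0%R) ->
      forall i : 'I_n,
        sumI (fun k => (dxdy F k i (p, v) * v k)%R) =
        (1 / 2 * sumI (fun k => dxdy F i k (p, v) * v k))%R)).
Proof.
move=> Hfin; split.
  move=> HM p v Hv i.
  have Hz : forall a b (z : pt n), dxdy F a b z = 0.
    move=> a b z; rewrite /dxdy /=.
    apply: (@pder_const _ _ _ _ (pder (Fsq F) (inr b) z)) => t.
    rewrite /pder /=.
    have -> : (fun s => Fsq F (upd (upd z (inl a) t) (inr b) s)) = (fun s => Fsq F (upd z (inr b) s)).
      by apply: functional_extensionality => s; rewrite /Fsq /= (HM _ z.1).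
    done.
  rewrite (@sum_ext _ _ (fun _ => 0)); last by move=> k; rewrite Hz; ring.
  rewrite (@sum_ext _ (fun k => dxdy F i k (p, v) * v k) (fun _ => 0)); last by move=> k; rewrite Hz; ring.
  rewrite sum0; ring.
move=> HC; apply: mink_of => //; exact: reverse.
Qed.
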